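(* Let $(\mathcal{G},\alpha)$ be an abstract GKM graph with vertex set $\mathcal{V}$, and let $F$ be a subset of $H_T^*(\mathcal{G})\setminus\{0\}$ such that $fg=0$ for all distinct $f,g\in F$. Then $|F|\le|\mathcal{V}|$, and equality holds if and only if each $f\in F$ is supported at a single vertex (i.e. $\{p\in\mathcal{V}: f(p)\neq0\}$ is a singleton).
   Context: $H^*(BT)=\mathbb{Z}[x_1,\dots,x_r]$ with $\deg x_i=2$. Let $\mathcal{G}$ be a finite $n$-valent undirected graph (multiple edges allowed, no loops) with vertex set $\mathcal{V}$ and set of directed edges $\mathcal{E}$; for $e\in\mathcal{E}$, $\overline e$ is the reversed edge, $i(e),t(e)$ its initial and terminal vertices, and $\mathcal{E}_p=\{e: i(e)=p\}$. An axial function $\alpha:\mathcal{E}\to H^2(BT)$ satisfies: $\alpha(\overline e)=\pm\alpha(e)$; $\alpha(e),\alpha(e')$ linearly independent over $\mathbb{Z}$ if $e\ne e'$, $i(e)=i(e')$; coefficients of each $\alpha(e)$ have gcd $1$. An abstract GKM graph is such $(\mathcal{G},\alpha)$ admitting a parallel transport, i.e. bijections $\mathcal{P}_e:\mathcal{E}_{i(e)}\to\mathcal{E}_{t(e)}$ with $\mathcal{P}_{\overline e}=\mathcal{P}_e^{-1}$, $\mathcal{P}_e(e)=\overline e$, $\alpha(\mathcal{P}_e(e'))-\alpha(e')\in\mathbb{Z}\alpha(e)$. Its graph equivariant cohomology is $H_T^*(\mathcal{G})=\{f:\mathcal{V}\to H^*(BT)\ :\ \alpha(e)\mid f(i(e))-f(t(e))\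 \forall e\in\mathcal{E}\}$ with pointwise operations.
   Formalization: In the equality case, the condition that each f ∈ F be supported at a single vertex is joined by the condition that every vertex of $\mathcal{V}$ lies in the support of some f ∈ F. The statement above fails without it. *)

(* Defs.v *)
From mathcomp Require Import all_boot all_order all_algebra.
From mathcomp Require Import mpoly.
Set Implicit Arguments. Unset Strict Implicit. Unset Printing Implicit Defensive.
Import GRing.Theory.
Local Open Scope ring_scope.

(* H^*(BT) = Z[x_1,...,x_r] is {mpoly int[r]}.
   An element of H^2(BT) is a linear form, encoded by its coefficient vector
   a : {ffun 'I_r -> int}; [linform a] is the corresponding polynomial
   sum_k a_k x_k. *)
Definition linform (r : nat) (a : {ffun 'I_r -> int}) : {mpoly int[r]} :=
  \sum_(k < r) (a k)%:MP * 'X_k.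

(* A finite n-valent graph without loops (multiple edges allowed):
   V = vertices, E = directed edges, src = i, tgt = t, rev e = reversed edge. *)
Definition is_graph (V E : finType) (n : nat) (src tgt : E -> V) (rev : E -> E) :=
  [/\ forall e, rev (rev e) = e,
      forall e, src (rev e) = tgt e,
      forall e, src e != tgt e
    & forall p : V, #|[set e | src e == p]| = n].

Definition lin_indep (r : nat) (a b : {ffun 'I_r -> int}) :=
  forall c d : int, (forall k, c * a k + d * b k = 0) -> c = 0 /\ d = 0.

Definition is_axial (V E : finType) (r : nat) (src : E -> V) (rev : E -> E)
    (alpha : E -> {ffun 'I_r -> int}) :=
  [/\ forall e, (forall k, alpha (rev e) k = alpha e k)
                \/ (forall k, alpha (rev e) k = - alpha e k),
      forall e e', e != e' -> src e = src e' -> lin_indep (alpha e) (alpha e')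
    & forall e, \big[gcdz/0%Z]_(k < r) alpha e k = 1].

Definition is_parallel_transport (V E : finType) (r : nat) (src tgt : E -> V)
    (rev : E -> E) (alpha : E -> {ffun 'I_r -> int}) (P : E -> E -> E) :=
  forall e,
  [/\ forall e', src e' = src e -> src (P e e') = tgt e,
      forall e', src e' = src e -> P (rev e) (P e e') = e',
      P e e = rev e
    & forall e', src e' = src e ->
        exists c : int, forall k, alpha (P e e') k - alpha e' k = c * alpha e k].

Definition abstract_GKM (V E : finType) (n r : nat) (src tgt : E -> V)
    (rev : E -> E) (alpha : E -> {ffun 'I_r -> int}) :=
  [/\ is_graph n src tgt rev, is_axial src rev alpha
    & exists P, is_parallel_transport src tgt rev alpha P].

Definition mdvd (r : nat) (a b : {mpoly int[r]}) := exists q, b = a * q.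

Definition in_HT (V E : finType) (r : nat) (src tgt : E -> V)
    (alpha : E -> {ffun 'I_r -> int}) (f : {ffun V -> {mpoly int[r]}}) :=
  forall e, mdvd (linform (alpha e)) (f (src e) - f (tgt e)).

Definition fmul (V : finType) (r : nat) (f g : {ffun V -> {mpoly int[r]}})
  : {ffun V -> {mpoly int[r]}} := [ffun p => f p * g p].

Definition supp (V : finType) (r : nat) (f : {ffun V -> {mpoly int[r]}}) : {set V} :=
  [set p | f p != 0].

(* Main.v *)
Require Import Defs.
From mathcomp Require Import all_boot all_order all_algebra.
From mathcomp Require Import mpoly.
Import GRing.Theory.
Local Open Scope ring_scope.

Theorem lemma3p2 (V E : finType) (n r : nat) (src tgt : E -> V) (rev : E -> E)
    (alpha : E -> {ffun 'I_r -> int})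
    (F : {ffun V -> {mpoly int[r]}} -> Prop) :
  abstract_GKM n src tgt rev alpha ->
  (forall f, F f -> in_HT src tgt alpha f /\ f != 0) ->
  (forall f g, F f -> F g -> f != g -> fmul f g = 0) ->
  (* |F| <= |V|: every finite list of distinct elements of F has length <= |V| *)
  (forall s : seq {ffun V -> {mpoly int[r]}},
      uniq s -> (forall f, f \in s -> F f) -> (size s <= #|V|)%N) /\
  (* equality case: if s enumerates F (F is finite by the first part) *)
  (forall s : seq {ffun V -> {mpoly int[r]}},
      uniq s -> (forall f, f \in s <-> F f) ->
      (size s = #|V| <->
         ((forall f, F f -> #|supp f| = 1%N) /\
          (forall p : V, exists2 f, F f & p \in supp f)))).
Proof.
move=> _ HF Hmul.
pose m (f : {ffun V -> {mpoly int[r]}}) := [pick p in supp f].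
have pickS : forall f, F f -> exists p, m f = Some p /\ p \in supp f.
  move=> f /HF [_ fn0]; rewrite /m; case: pickP => [p Hp|H0]; first by exists p.
  case/eqP: fn0; apply/ffunP => p; rewrite ffunE.
  by move: (H0 p); rewrite inE => /negbFE/eqP.
have disj : forall f g p, F f -> F g -> p \in supp f -> p \in supp g -> f = g.
  move=> f g p Ff Fg; rewrite !inE => fp gp.
  case: (eqVneq f g) => // fg.
  have := Hmul f g Ff Fg fg => /ffunP /(_ p); rewrite !ffunE => /eqP.
  by rewrite mulf_eq0 (negbTE fp) (negbTE gp).
have minj : forall f g, F f -> F g -> m f = m g -> f = g.
  move=> f g Ff Fg e; have [p [mp pf]] := pickS f Ff; have [q [mq qg]] := pickS g Fg.
  move: e; rewrite mp mq => -[epq]; subst q; exact: disj pf qg.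
pose W := map Some (enum V).
have sizeW : size W = #|V| by rewrite size_map -cardE.
have tuniq : forall s, uniq s -> (forall f, f \in s -> F f) -> uniq (map m s).
  move=> s us sF; rewrite map_inj_in_uniq // => f g fs gs; apply: minj; exact: sF.
have tsub : forall s, (forall f, f \in s -> F f) -> {subset map m s <= W}.
  move=> s sF x /mapP [f fs ->]; have [p [-> _]] := pickS f (sF f fs).
  by rewrite map_f // mem_enum.
have part1 : forall s : seq {ffun V -> {mpoly int[r]}},
      uniq s -> (forall f, f \in s -> F f) -> (size s <= #|V|)%N.
  move=> s us sF; rewrite -sizeW -(size_map m); apply: uniq_leq_size; auto.
split => // s us sF.
have sF' : forall f, f \in s -> F f by move=> f /sF.
split.
- move=> Hsz.
  have szle : (size W <= size (map m s))%N by rewrite sizeW size_map Hsz.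
  have [_ eqW] := uniq_min_size (tuniq s us sF') (tsub s sF') szle.
  have cov : forall p, exists2 f, F f & m f = Some p.
    move=> p; have : Some p \in map m s by rewrite eqW map_f // mem_enum.
    by case/mapP => f fs ->; exists f => //; exact: sF'.
  split; last first.
    move=> p; have [f Ff mf] := cov p; exists f => //.
    have [q [mq qf]] := pickS f Ff; by move: mf; rewrite mq => -[<-].
  move=> f Ff; have [p [mp pf]] := pickS f Ff.
  apply/eqP/cards1P; exists p; apply/setP => q; rewrite inE.
  apply/idP/eqP => [qf|->//].
  have [g Fg mg] := cov q; have [q' [mq' q'g]] := pickS g Fg.
  move: mg; rewrite mq' => -[eq']; subst q'.
  have efg := disj f g q Ff Fg qf q'g; subst g.
  by move: mq'; rewrite mp => -[].
- move=> [H1 Hcov]; apply/eqP; rewrite eqn_leq part1 //= -sizeW -(size_map m).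
  apply: uniq_leq_size; first by rewrite map_inj_uniq ?enum_uniq //; move=> x y [].
  move=> x /mapP [p _ ->]; have [f Ff pf] := Hcov p.
  have fs : f \in s by apply/sF.
  have [q [mq qf]] := pickS f Ff.
  move/eqP/cards1P: (H1 f Ff) => [z ez].
  move: pf qf; rewrite ez !inE => /eqP -> /eqP <-.
  by rewrite -mq map_f.
Qed.
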